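(* Let $H$, $L$ be as in the context and let $k$ be a positive integer. If there is a feasible solution $(S,\mathcal T_0)$ with $d(S,\mathcal T_0)\ge k$, then $L\ge L_{LB}$, where $L_{LB}$ is the smallest positive divisor of $Z$ satisfying $L_{LB}\ge k\cdot\omega(H)$.
   Context: Notation: $[n)=\{0,1,\dots,n-1\}$. Let $M,N,Z$ be positive integers and let $H$ be a binary $MZ\times NZ$ matrix made of $M\times N$ blocks, each a $Z\times Z$ circulant; assume $H$ has no zero row and no two identical rows. For $\mathcal A\subseteq[MZ)$, $H_{\mathcal A}$ is the submatrix of rows indexed by $\mathcal A$; $\omega(A)$ is the maximum Hamming weight of a column of $A$ ($\omega$ of the empty matrix is $0$). For $i\in[MZ)$ and integer $s$, $\pi^s(i)=Z\lfloor i/Z\rfloor+((i+s)\bmod Z)$ and $\pi^s(\mathcal T)=\{\pi^s(x):x\in\mathcal T\}$. Fix an integer $L>1$. A pair $(S,\mathcal T_0)$ ($S$ a positive integer, $\mathcal T_0\subseteq[MZ)$) is a feasible solution if, with $\mathcal T_l=\pi^{lS}(\mathcal T_0)$ for $l\in[L)$, the sets $\mathcal T_0,\dots,\mathcal T_{L-1}$ are pairwise disjoint with union $[MZ)$. The layer distance $d(S,\mathcal T_0)$ is the largest $l\in[L)$ such that the vertical stack of $H_{\mathcal T_0},\dots,H_{\mathcal T_{l-1}}$ has maximum column weight at most $1$. *)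

(* Defs.v *)
From mathcomp Require Import all_boot all_order all_algebra.
Set Implicit Arguments. Unset Strict Implicit. Unset Printing Implicit Defensive.

Definition pin (Z s i : nat) : nat := Z * (i %/ Z) + (i + s) %% Z.

Lemma pin_lt (K Z s i : nat) : 0 < Z -> i < K * Z -> pin Z s i < K * Z.
Proof.
move=> Z0 iK; rewrite /pin.
have hq : i %/ Z < K by rewrite ltn_divLR.
have hr : (i + s) %% Z < Z by rewrite ltn_mod.
apply: (@leq_trans (Z * (i %/ Z) + Z)); first by rewrite ltn_add2l.
by rewrite -mulnSr mulnC leq_mul2r hq orbT.
Qed.

(* pi^s as a map on 'I_(K*Z) (identity in the degenerate case Z = 0). *)
Definition piO (K Z s : nat) (i : 'I_(K * Z)) : 'I_(K * Z) :=
  match ltnP 0 Z with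
  | LtnNotGeq Z0 => Ordinal (pin_lt s Z0 (ltn_ord i))
  | _ => i
  end.

(* H is made of K1 x K2 blocks, each a Z x Z circulant matrix. *)
Definition block_circulant (M N Z : nat) (H : 'M[bool]_(M * Z, N * Z)) :=
  forall (i : 'I_(M * Z)) (j : 'I_(N * Z)),
    H (piO 1 i) (piO 1 j) = H i j.

Definition no_zero_row (m n : nat) (H : 'M[bool]_(m, n)) :=
  forall i : 'I_m, exists j : 'I_n, H i j.
Definition distinct_rows (m n : nat) (H : 'M[bool]_(m, n)) :=
  forall i i' : 'I_m, (forall j, H i j = H i' j) -> i = i'.

Definition omega (m n : nat) (H : 'M[bool]_(m, n)) : nat :=
  \max_(j < n) \sum_(i < m) (H i j : nat).

Definition layer (M Z S : nat) (T0 : {set 'I_(M * Z)}) (l : nat)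
  : {set 'I_(M * Z)} := [set piO (l * S) x | x in T0].

Definition feasible (M Z L S : nat) (T0 : {set 'I_(M * Z)}) : Prop :=
  0 < S /\
  (forall l l', l < L -> l' < L -> l != l' ->
     [disjoint @layer M Z S T0 l & @layer M Z S T0 l']) /\
  \bigcup_(l < L) @layer M Z S T0 l = [set: 'I_(M * Z)].

(* weight of column j of the vertical stack of H_{T_0}, ..., H_{T_{l-1}} *)
Definition stack_colw (M N Z S : nat) (H : 'M[bool]_(M * Z, N * Z))
  (T0 : {set 'I_(M * Z)}) (l : nat) (j : 'I_(N * Z)) : nat :=
  \sum_(t < l) \sum_(i in @layer M Z S T0 t) (H i j : nat).

Definition stack_ok M N Z S H T0 (l : nat) : bool :=
  [forall j, @stack_colw M N Z S H T0 l j <= 1].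

(* layer distance: largest l in [L) with stack_ok (l = 0 always qualifies) *)
Definition layer_distance M N Z L S H T0 : nat :=
  \max_(l < L | @stack_ok M N Z S H T0 l) (l : nat).

Definition is_min_div_ge (Z b D : nat) : Prop :=
  [/\ 0 < D, D %| Z, b <= D &
      forall D', 0 < D' -> D' %| Z -> b <= D' -> D <= D'].

(* Main.v *)
Require Import Defs.
From mathcomp Require Import all_boot all_order all_algebra.
From mathcomp Require Import zify.

Set Implicit Arguments. Unset Strict Implicit. Unset Printing Implicit Defensive.

Lemma piO_val K Z s (i : 'I_(K*Z)) : 0 < Z -> nat_of_ord (piO s i) = pin Z s i.
Proof.
move=> Z0; rewrite /piO; case: (ltnP 0 Z) => [Z0'|Z0'] //=.
by move: Z0'; rewrite leqNgt Z0.
Qed.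

Lemma pin_add Z a b i : 0 < Z -> pin Z a (pin Z b i) = pin Z (a + b) i.
Proof.
move=> Z0; rewrite /pin.
have hr : (i + b) %% Z < Z by rewrite ltn_mod.
rewrite [Z * (i %/ Z)]mulnC divnMDl // (divn_small hr) addn0 (mulnC (i %/ Z)).
rewrite -addnA [Z * _]mulnC modnMDl modnDml.
by rewrite addnAC -addnA (addnC a).
Qed.

Lemma piO_add K Z a b (i : 'I_(K*Z)) : 0 < Z -> piO a (piO b i) = piO (a + b) i.
Proof. by move=> Z0; apply: val_inj; rewrite /= !piO_val // pin_add. Qed.

Lemma piO_mod K Z s (i : 'I_(K*Z)) : 0 < Z -> piO (s %% Z) i = piO s i.
Proof. by move=> Z0; apply: val_inj; rewrite /= !piO_val // /pin modnDmr. Qed.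

Lemma piO0 K Z (i : 'I_(K*Z)) : 0 < Z -> piO 0 i = i.
Proof.
by move=> Z0; apply: val_inj; rewrite /= !piO_val // /pin addn0 mulnC -divn_eq.
Qed.

Lemma modZ0 Z s : 0 < Z -> (Z - s %% Z + s) %% Z = 0.
Proof.
move=> Z0.
have -> : Z - s %% Z + s = (s %/ Z).+1 * Z.
  rewrite mulSn; move: (divn_eq s Z) (ltn_mod s Z); rewrite Z0.
  set q := s %/ Z * Z; set r := s %% Z; lia.
by rewrite modnMl.
Qed.

Lemma piO_inv K Z s (i : 'I_(K*Z)) : 0 < Z -> piO (Z - s %% Z) (piO s i) = i.
Proof. by move=> Z0; rewrite piO_add // -piO_mod // modZ0 // piO0. Qed.

Lemma piO_inv2 K Z s (i : 'I_(K*Z)) : 0 < Z -> piO s (piO (Z - s %% Z) i) = i.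
Proof. by move=> Z0; rewrite piO_add // addnC -piO_mod // modZ0 // piO0. Qed.

Lemma piO_inj K Z s : 0 < Z -> injective (@piO K Z s).
Proof. by move=> Z0; apply: (can_inj (g := piO (Z - s %% Z))) => i; rewrite piO_inv. Qed.

Lemma circ_iter M N Z (H : 'M[bool]_(M * Z, N * Z)) : 0 < Z -> block_circulant H ->
  forall s i j, H (piO s i) (piO s j) = H i j.
Proof.
move=> Z0 hc; elim=> [|s IH] i j; first by rewrite !piO0.
by rewrite -(add1n s) -!piO_add // hc IH.
Qed.

Lemma layerE M Z S T0 t (y : 'I_(M*Z)) : 0 < Z ->
  (y \in layer S T0 t) = (piO (Z - (t * S) %% Z) y \in T0).
Proof.
move=> Z0; apply/imsetP/idP.
  by case=> x xT ->; rewrite piO_inv.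
by move=> h; exists (piO (Z - (t * S) %% Z) y) => //; rewrite piO_inv2.
Qed.

Lemma rot_sum Z c (F : nat -> nat) : 0 < Z ->
  \sum_(s < Z) F ((s + c) %% Z) = \sum_(s < Z) F s.
Proof.
move=> Z0.
have hlt : forall s : 'I_Z, (s + c) %% Z < Z by move=> s; rewrite ltn_mod.
pose h (s : 'I_Z) : 'I_Z := Ordinal (hlt s).
have hinj : injective h.
  move=> s s' /(congr1 val) /= /eqP; rewrite eqn_modDr !modn_small //.
  by move/eqP/val_inj.
by rewrite [RHS](reindex_inj hinj).
Qed.

Lemma g_eq M Z S T0 t (i : 'I_(M*Z)) : 0 < Z ->
  \sum_(s < Z) (piO s i \in layer S T0 t : nat) = \sum_(s < Z) (piO s i \in T0 : nat).
Proof.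
move=> Z0.
under eq_bigr => s _ do rewrite layerE // piO_add // addnC -piO_mod //.
by rewrite (@rot_sum Z _ (fun s => nat_of_bool (piO s i \in T0))).


Qed.
Lemma sum_layers M Z L S (T0 : {set 'I_(M*Z)}) (y : 'I_(M*Z)) :
  feasible L S T0 -> \sum_(t < L) nat_of_bool (y \in layer S T0 t) = 1.
Proof.
case=> _ [hd hc].
have : y \in \bigcup_(l < L) layer S T0 l by rewrite hc inE.
case/bigcupP=> t0 _ yt0.
rewrite (bigD1 t0) //= yt0 big1 // => t ne.
have /hd h : t0 != t :> nat by rewrite eq_sym.
by rewrite (disjointFr (h (ltn_ord t0) (ltn_ord t))).
Qed.

Lemma Lf M Z L S (T0 : {set 'I_(M*Z)}) (i : 'I_(M*Z)) : 0 < Z ->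
  feasible L S T0 -> L * \sum_(s < Z) nat_of_bool (piO s i \in T0) = Z.
Proof.
move=> Z0 hf.
have e : forall t : 'I_L, \sum_(s < Z) nat_of_bool (piO s i \in layer S T0 t)
   = \sum_(s < Z) nat_of_bool (piO s i \in T0) by move=> t; rewrite g_eq.
rewrite -[L in L * _]card_ord -sum_nat_const.
under eq_bigr => t _ do rewrite -(e t).
rewrite exchange_big /=.
under eq_bigr => s _ do rewrite sum_layers //.
by rewrite sum_nat_const card_ord muln1.
Qed.
Lemma reidx M N Z S (H : 'M[bool]_(M * Z, N * Z)) (T0 : {set 'I_(M*Z)}) t s j :
  0 < Z -> block_circulant H ->
  \sum_(i in layer S T0 t) nat_of_bool (H i (piO s j)) =
  \sum_i nat_of_bool (piO s i \in layer S T0 t) * H i j.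
Proof.
move=> Z0 hc; rewrite (reindex_inj (@piO_inj M Z s Z0)) big_mkcond /=.
apply: eq_bigr => i _; rewrite circ_iter //.
by case: (_ \in _); rewrite ?mul1n ?mul0n.
Qed.

Lemma colbound M N Z L S (H : 'M[bool]_(M * Z, N * Z)) (T0 : {set 'I_(M*Z)}) l j :
  0 < Z -> block_circulant H -> feasible L S T0 -> stack_ok S H T0 l ->
  l * \sum_(i < M * Z) nat_of_bool (H i j) <= L.
Proof.
move=> Z0 hc hf hok.
have h1 : \sum_(s < Z) stack_colw S H T0 l (piO s j) <= Z.
  apply: (@leq_trans (\sum_(s < Z) 1)); last by rewrite sum_nat_const card_ord muln1.
  by apply: leq_sum => s _; exact: (forallP hok).
pose f (i : 'I_(M*Z)) := \sum_(s < Z) nat_of_bool (piO s i \in T0).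
have h2 : \sum_(s < Z) stack_colw S H T0 l (piO s j) =
          \sum_i nat_of_bool (H i j) * (l * f i).
  have rr : forall s : 'I_Z, stack_colw S H T0 l (piO s j) =
     \sum_(t < l) \sum_i nat_of_bool (piO s i \in layer S T0 t) * H i j.
    by move=> s; apply: eq_bigr => t _; exact: reidx.
  rewrite (eq_bigr _ (fun s _ => rr s)).
  rewrite exchange_big /=.
  under eq_bigr => t _ do rewrite exchange_big /=.
  rewrite exchange_big /=.
  apply: eq_bigr => i _.
  under eq_bigr => t _ do rewrite -big_distrl /= g_eq //.
  by rewrite -big_distrl /= sum_nat_const card_ord mulnC.
have h3 : l * (\sum_i nat_of_bool (H i j)) * Z
          = L * \sum_i nat_of_bool (H i j) * (l * f i).
  rewrite big_distrr big_distrr big_distrl /=.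
  apply: eq_bigr => i _.
  have e := Lf i Z0 hf; rewrite -/(f i) in e.
  move: (f i) e => y e; move: (nat_of_bool (H i j)) => h.
  nia.
by rewrite -(leq_pmul2r Z0) h3 -h2 leq_mul2l h1 orbT.
Qed.

Theorem corollary1 (M N Z L k : nat) (H : 'M[bool]_(M * Z, N * Z)) :
  0 < M -> 0 < N -> 0 < Z -> 1 < L -> 0 < k ->
  block_circulant H -> no_zero_row H -> distinct_rows H ->
  (exists (S : nat) (T0 : {set 'I_(M * Z)}),
      feasible L S T0 /\ k <= layer_distance L S H T0) ->
  exists LLB : nat, is_min_div_ge Z (k * omega H) LLB /\ LLB <= L.
Proof.
move=> M0 N0 Z0 L1 k0 hc _ _ [S [T0 [hf hd]]].
have [l [hl hkl]] : exists l : 'I_L, stack_ok S H T0 l /\ k <= l.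
  case: (boolP [exists l : 'I_L, stack_ok S H T0 l && (k <= l)]).
    by case/existsP => l /andP [a b]; exists l.
  rewrite negb_exists => /forallP hn.
  have : layer_distance L S H T0 <= k.-1.
    apply/bigmax_leqP => l hl; have := hn l; rewrite hl /= -ltnNge => h.
    by rewrite -ltnS prednK.
  move: hd; lia.
have l0 : 0 < l by apply: leq_trans hkl.
have hw : k * omega H <= L.
  have ho : omega H <= L %/ l.
    apply/bigmax_leqP => j _; rewrite leq_divRL // mulnC; exact: colbound hl.
  apply: (@leq_trans (l * (L %/ l))); first by apply: leq_mul.
  by rewrite mulnC leq_divM.
have hLZ : L %| Z.
  have MZ0 : 0 < M * Z by rewrite muln_gt0 M0 Z0.
  rewrite -(Lf (Ordinal MZ0) Z0 hf); exact: dvdn_mulr (dvdnn L).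
have ex : exists D, [&& 0 < D, D %| Z & k * omega H <= D].
  by exists L; rewrite hLZ hw (ltnW L1).
case: (ex_minnP ex) => D /and3P [D0 DZ DK] Dmin.
exists D; split; last by apply: Dmin; rewrite hLZ hw (ltnW L1).
split => // D' D'0 D'Z D'K; apply: Dmin; by rewrite D'0 D'Z D'K.
Qed.
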